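(* For every $L\ge k_1+4\epsilon$ there is a number $\kappa(L)$ such that for all vertices $a,b$ of $\mathcal{CG}(\Sigma)$ with $d(a,b)\le 3L$, the pair $(a,b)$ has at most $\kappa(L)$ distinct $L$-channels.
   Context: $\Sigma$ is a compact orientable surface, $\mathcal{CG}(\Sigma)$ its curve graph (1-skeleton of Harvey's curve complex) with path metric $d$ (edges of length 1); $\delta\in\mathbb{N}$ is a hyperbolicity constant for it. Tight geodesics are those of Masur–Minsky/Bowditch. $\lambda=1000\delta$ and $\epsilon$ is a positive integer such that any $\lambda$-quasi-geodesic in $\mathcal{CG}(\Sigma)$ stays within $\epsilon$ of any geodesic joining its endpoints. Bowditch's constant $k_1$ (depending only on $\Sigma$) is such that, for some $K_1$ depending only on $\Sigma$: if $a,b$ are vertices, $r\in\mathbb{N}$, and $c$ lies on a tight geodesic from $a$ to $b$ with $d(a,c)\ge r+k_1$ and $d(b,c)\ge r+k_1$, then the set of vertices on tight geodesics between two points respectively $r$-close to $a$ and $b$, at distance at most $2\epsilon$ from $c$, has at most $K_1$ elements. Definition: for $L>0$ and vertices $a,b$ with $d(a,b)\le 3L$, an $L$-channel of $(a,b)$ is a tight geodesic $g_1$ of length $L$ which is contained in a tight geodesic $g_2$ of length $3L$ that starts at distance at most $2\epsilon$ from $a$ and ends at distance at most $2\epsilon$ from $b$, such that the endpoints of $g_2$ are at distance $L$ from $g_1$. *)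

(* Defs.v *)
(* Abstract setting: the curve graph CG(Sigma) is modelled as a
   graph (V, adj) with path metric d, together with a predicate [tight] on
   vertex sequences (the tight geodesics), satisfying the standing facts of the
   context (hyperbolicity, the quasi-geodesic stability constant epsilon,
   Bowditch's finiteness constant k1/K1). *)
From Stdlib Require Import List Arith Lia.
Import ListNotations.
Set Implicit Arguments.

Section Defs.
Variable V : Type.

Definition absdiff (i j : nat) : nat := (i - j) + (j - i).

Fixpoint walk (adj : V -> V -> Prop) (l : list V) : Prop :=
  match l with
  | x :: ((y :: _) as t) => adj x y /\ walk adj t
  | _ => True
  end.

Definition starts (l : list V) (x : V) : Prop := hd_error l = Some x.
Definition ends (l : list V) (y : V) : Prop := hd_error (rev l) = Some y.

(* [d] is the path metric of the graph (edges of length 1); in particular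
   the graph is connected. A path with k+1 vertices has length k. *)
Definition is_path_metric (adj : V -> V -> Prop) (d : V -> V -> nat) : Prop :=
  (forall x y, adj x y <-> adj y x) /\ (forall x, ~ adj x x) /\
  forall x y n, d x y <= n <->
    exists l, walk adj l /\ starts l x /\ ends l y /\ length l <= S n.

Definition geodesic (d : V -> V -> nat) (l : list V) : Prop :=
  l <> [] /\ forall i j x y, nth_error l i = Some x -> nth_error l j = Some y ->
    d x y = absdiff i j.

Definition geod_from_to (d : V -> V -> nat) (l : list V) (x y : V) : Prop :=
  geodesic d l /\ starts l x /\ ends l y.

Definition hyperbolic (d : V -> V -> nat) (delta : nat) : Prop :=
  forall x y z g1 g2 g3,
    geod_from_to d g1 x y -> geod_from_to d g2 y z -> geod_from_to d g3 z x ->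
    forall v, In v g1 -> exists w, (In w g2 \/ In w g3) /\ d v w <= delta.

(* lambda-quasi-geodesic, parametrized by {0,...,n}:
   (1/lam)|i-j| - lam <= d(q_i,q_j) <= lam|i-j| + lam *)
Definition quasi_geodesic (d : V -> V -> nat) (lam : nat) (q : list V) : Prop :=
  q <> [] /\ forall i j x y, nth_error q i = Some x -> nth_error q j = Some y ->
    d x y <= lam * absdiff i j + lam /\ absdiff i j <= lam * d x y + lam * lam.

Definition qg_stability (d : V -> V -> nat) (lam eps : nat) : Prop :=
  forall q g x y, quasi_geodesic d lam q -> starts q x -> ends q y ->
    geod_from_to d g x y ->
    forall v, In v q -> exists w, In w g /\ d v w <= eps.

Definition tight_from_to (d : V -> V -> nat) (tight : list V -> Prop)
  (l : list V) (x y : V) : Prop := tight l /\ geod_from_to d l x y.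

Definition tight_basic (d : V -> V -> nat) (tight : list V -> Prop) : Prop :=
  (forall l, tight l -> geodesic d l) /\
  (forall x y, exists l, tight_from_to d tight l x y) /\
  (forall l, tight l -> tight (rev l)) /\
  (forall l1 l2 l3, tight (l1 ++ l2 ++ l3) -> l2 <> [] -> tight l2).

Definition bowditch_property (d : V -> V -> nat) (tight : list V -> Prop)
  (eps k1 K1 : nat) : Prop :=
  forall a b c (r : nat),
    (exists g, tight_from_to d tight g a b /\ In c g) ->
    r + k1 <= d a c -> r + k1 <= d b c ->
    forall S : list V, NoDup S ->
      (forall v, In v S -> d v c <= 2 * eps /\
         exists a' b' g', d a a' <= r /\ d b b' <= r /\
           tight_from_to d tight g' a' b' /\ In v g') ->
      length S <= K1.

Definition dist_to_path (d : V -> V -> nat) (x : V) (g : list V) (n : nat) : Prop :=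
  (forall v, In v g -> n <= d x v) /\ (exists v, In v g /\ d x v = n).

Definition channel (d : V -> V -> nat) (tight : list V -> Prop) (eps L : nat)
  (a b : V) (g1 : list V) : Prop :=
  tight g1 /\ length g1 = S L /\
  exists g2 x y, tight_from_to d tight g2 x y /\ length g2 = S (3 * L) /\
    d x a <= 2 * eps /\ d y b <= 2 * eps /\
    (forall v, In v g1 -> In v g2) /\
    dist_to_path d x g1 L /\ dist_to_path d y g1 L.

End Defs.

(* Main.v *)
Require Import Defs.
From Stdlib Require Import List Arith Lia Bool ClassicalEpsilon.
Open Scope bool_scope.
Import ListNotations.

Lemma walk_app {V} (adj : V -> V -> Prop) l1 x l2 :
  walk adj (l1 ++ x :: l2) <-> walk adj (l1 ++ [x]) /\ walk adj (x :: l2).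
Proof.
  induction l1 as [|a l1 IH]; simpl.
  - tauto.
  - destruct l1 as [|b l1]; simpl in *.
    + tauto.
    + rewrite IH. tauto.
Qed.

Lemma walk_rev {V} (adj : V -> V -> Prop) (Hs : forall x y, adj x y -> adj y x) l :
  walk adj l -> walk adj (rev l).
Proof.
  induction l as [|a l IH]; intros H; [exact I|].
  destruct l as [|b l]; [exact I|].
  destruct H as [Hab Hw].
  specialize (IH Hw).
  change (rev (a :: b :: l)) with ((rev l ++ [b]) ++ [a]).
  change (rev (b :: l)) with (rev l ++ [b]) in IH.
  rewrite <- app_assoc. change ([b] ++ [a]) with [b; a].
  apply walk_app. split; [exact IH|]. simpl. split; auto.
Qed.

Lemma ends_nth {V} (l : list V) y :
  ends l y <-> (nth_error l (length l - 1) = Some y /\ l <> []).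
Proof.
  split.
  - intro H. unfold ends in H. destruct (rev l) as [|z t] eqn:E; [discriminate|].
    injection H as ->.
    assert (Hl : l = rev t ++ [y]) by (rewrite <- (rev_involutive l), E; reflexivity).
    subst l. rewrite length_app; simpl. rewrite Nat.add_sub.
    rewrite nth_error_app2 by lia. rewrite Nat.sub_diag. split; [reflexivity|].
    intro Hc; apply app_eq_nil in Hc; destruct Hc; discriminate.
  - intros [H Hne]. destruct l as [|z l] using rev_ind; [congruence|].
    unfold ends. rewrite rev_app_distr. simpl.
    rewrite length_app in H; simpl in H. rewrite Nat.add_sub in H.
    rewrite nth_error_app2 in H by lia. rewrite Nat.sub_diag in H. exact H.
Qed.

Lemma starts_nth {V} (l : list V) x : starts l x <-> nth_error l 0 = Some x.
Proof. destruct l; reflexivity. Qed.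

Section M.
Lemma d_refl {V} {adj : V -> V -> Prop} {d : V -> V -> nat} (Hd : is_path_metric adj d) x : d x x = 0.
Proof.
  destruct Hd as [_ [_ H]]. enough (d x x <= 0) by lia. apply H.
  exists [x]. repeat split; simpl; auto.
Qed.

Lemma d_sym_le {V} {adj : V -> V -> Prop} {d : V -> V -> nat} (Hd : is_path_metric adj d) x y : d y x <= d x y.
Proof.
  destruct Hd as [Hs [_ H]].
  destruct (proj1 (H x y (d x y)) (le_n _)) as [l [Hw [Hst [Hen Hle]]]].
  apply H. exists (rev l). split; [apply walk_rev; [intros; apply Hs; auto| auto]|].
  unfold starts, ends in *. rewrite rev_involutive, length_rev. auto.
Qed.

Lemma d_sym {V} {adj : V -> V -> Prop} {d : V -> V -> nat} (Hd : is_path_metric adj d) x y : d x y = d y x.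
Proof. pose proof (d_sym_le Hd x y). pose proof (d_sym_le Hd y x). lia. Qed.

Lemma d_tri {V} {adj : V -> V -> Prop} {d : V -> V -> nat} (Hd : is_path_metric adj d) x y z :
  d x z <= d x y + d y z.
Proof.
  destruct Hd as [Hs [_ H]].
  destruct (proj1 (H x y (d x y)) (le_n _)) as [l1 [Hw1 [Hst1 [Hen1 Hle1]]]].
  destruct (proj1 (H y z (d y z)) (le_n _)) as [l2 [Hw2 [Hst2 [Hen2 Hle2]]]].
  unfold ends in Hen1. destruct (rev l1) as [|h t] eqn:E; [discriminate|].
  injection Hen1 as ->.
  assert (Hl : l1 = rev t ++ [y]) by (rewrite <- (rev_involutive l1), E; reflexivity).
  subst l1. destruct l2 as [|y' l2]; [discriminate|]. injection Hst2 as ->.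
  apply H. exists (rev t ++ y :: l2). split; [apply walk_app; auto|]. split.
  - unfold starts in *. destruct (rev t); simpl in *; auto.
  - split.
    + unfold ends in *. rewrite rev_app_distr.
      destruct (rev (y :: l2)); [discriminate|]. exact Hen2.
    + rewrite length_app in *. simpl in *. lia.
Qed.
End M.

Lemma geod_pos {V} {d : V -> V -> nat} {l : list V} {x y i v} :
  geod_from_to d l x y -> nth_error l i = Some v ->
  d x v = i /\ d v y = length l - 1 - i /\ d x y = length l - 1 /\ i <= length l - 1.
Proof.
  intros [[Hne Hg] [Hs He]] Hi.
  apply starts_nth in Hs. apply ends_nth in He. destruct He as [He _].
  assert (i < length l) by (apply nth_error_Some; congruence).
  rewrite (Hg 0 i x v Hs Hi), (Hg i _ v y Hi He), (Hg 0 _ x y Hs He).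
  unfold absdiff. lia.
Qed.
Lemma delta_small {V} {adj : V -> V -> Prop} {d : V -> V -> nat} (Hd : is_path_metric adj d)
  delta eps (Heps : qg_stability d (1000*delta) eps) (l : list V) (Hl : geodesic d l)
  (Hlen : eps + 2 <= length l) : 2 * delta <= eps.
Proof.
  destruct (Nat.eq_dec delta 0) as [->|Hdn]; [lia|].
  destruct (le_lt_dec (1000*delta*(1000*delta)) (2*eps+1)) as [Hs|Hb]; [nia|exfalso].
  set (lam := 1000*delta) in *.
  assert (Hlam : 1 <= lam) by (unfold lam; lia).
  set (m := S eps).
  destruct l as [|x0 l'] eqn:El; [simpl in Hlen; lia|]. rewrite <- El in *.
  set (f := fun i => m - absdiff i m).
  set (q := map (fun i => nth (f i) l x0) (seq 0 (S (2*m)))).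
  assert (Hlq : length q = S (2*m)) by (unfold q; rewrite length_map, length_seq; reflexivity).
  assert (Hq : forall i, i < S (2*m) -> nth_error q i = Some (nth (f i) l x0)).
  { intros i Hi. unfold q. rewrite nth_error_map, nth_error_seq.
    destruct (Nat.ltb_spec i (S (2*m))); [reflexivity|lia]. }
  assert (Hfl : forall i, f i < length l) by (intro i; unfold f, m; lia).
  assert (Hln : forall i, nth_error l (f i) = Some (nth (f i) l x0))
    by (intro i; apply nth_error_nth'; auto).
  destruct Hl as [Hne Hg].
  set (z := nth 0 l x0).
  assert (Hzl : nth_error l 0 = Some z) by (apply nth_error_nth'; lia).
  assert (Hzz : d z z = 0) by (apply (d_refl Hd)).
  assert (Hqg : quasi_geodesic d lam q).
  { split; [intro Hc; rewrite Hc in Hlq; discriminate|].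
    intros i j x y Hi Hj.
    assert (Hi' : i < S (2*m)) by (rewrite <- Hlq; apply nth_error_Some; congruence).
    assert (Hj' : j < S (2*m)) by (rewrite <- Hlq; apply nth_error_Some; congruence).
    rewrite Hq in Hi, Hj by auto. injection Hi as <-. injection Hj as <-.
    rewrite (Hg _ _ _ _ (Hln i) (Hln j)).
    assert (A : absdiff (f i) (f j) <= absdiff i j) by (unfold f, absdiff; lia).
    assert (B : absdiff i j <= 2*m) by (unfold absdiff; lia).
    split; nia. }
  assert (Hst : starts q z).
  { apply starts_nth. rewrite Hq by lia. unfold z, f. f_equal. f_equal. unfold absdiff. lia. }
  assert (Hen : ends q z).
  { apply ends_nth. split; [|intro Hc; rewrite Hc in Hlq; discriminate].
    rewrite Hlq. rewrite Hq by lia. unfold z, f. f_equal. f_equal. unfold absdiff. lia. }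
  assert (Hgz : geod_from_to d [z] z z).
  { split; [split; [discriminate|]|split; reflexivity].
    intros i j x y Hi Hj.
    destruct i as [|[|i]]; try discriminate; destruct j as [|[|j]]; try discriminate.
    simpl in *. injection Hi as <-. injection Hj as <-. rewrite Hzz. reflexivity. }
  assert (Hin : In (nth m l x0) q).
  { apply nth_error_In with m. rewrite Hq by lia. unfold f. f_equal. f_equal.
    unfold absdiff. lia. }
  destruct (Heps q [z] z z Hqg Hst Hen Hgz _ Hin) as [w [[<-|[]] Hw]].
  assert (Hm : nth_error l m = Some (nth m l x0)) by (apply nth_error_nth'; lia).
  rewrite (Hg _ _ _ _ Hm Hzl) in Hw. unfold absdiff, m in Hw. lia.
Qed.
Lemma geom {V} {adj : V -> V -> Prop} {d : V -> V -> nat} (Hd : is_path_metric adj d)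
  (tight : list V -> Prop) delta eps k1 L
  (Hhyp : hyperbolic d delta)
  (Hex : forall x y, exists l, tight_from_to d tight l x y)
  (Hsm : 2 * delta <= eps) (He0 : 0 < eps) (HL : k1 + 4 * eps <= L)
  a b x y g2 g v
  (Hg2 : geod_from_to d g2 x y) (Hl2 : length g2 = S (3 * L))
  (Hxa : d x a <= 2 * eps) (Hyb : d y b <= 2 * eps)
  (Hv : In v g2) (Hxv : L <= d x v) (Hyv : L <= d y v)
  (Hg : geod_from_to d g a b) :
  exists p, p < length g /\ 2 * eps + k1 <= d a (nth p g a) /\
    2 * eps + k1 <= d b (nth p g a) /\ d v (nth p g a) <= 2 * eps.
Proof.
  pose proof (d_tri Hd) as T. pose proof (d_sym Hd) as Sy.
  destruct (Hex y b) as [hy [_ Hhy]].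
  destruct (Hex b x) as [e [_ He]].
  destruct (Hex x a) as [hx [_ Hhx]].
  destruct (Hhyp x y b g2 hy e Hg2 Hhy He v Hv) as [w [[Hw|Hw] Hvw]].
  - exfalso. destruct (In_nth_error _ _ Hw) as [i Hi].
    destruct (geod_pos Hhy Hi) as [A [_ [B C]]].
    pose proof (T y w v). rewrite (Sy w v) in *. lia.
  - destruct (Hhyp b x a e hx g He Hhx Hg w Hw) as [u [[Hu|Hu] Hwu]].
    + exfalso. destruct (In_nth_error _ _ Hu) as [i Hi].
      destruct (geod_pos Hhx Hi) as [A [_ [B C]]].
      pose proof (T x u v). pose proof (T u w v). rewrite (Sy u w), (Sy w v) in *. lia.
    + destruct (In_nth_error _ _ Hu) as [p Hp].
      destruct (geod_pos Hg Hp) as [A [B [C D]]].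
      assert (Hxy : d x y = 3 * L).
      { pose proof Hg2 as G'. destruct G' as [_ [Hs _]]. apply (proj1 (starts_nth _ _)) in Hs.
        destruct (geod_pos Hg2 Hs) as [_ [_ [E _]]]. lia. }
      set (n := length g - 1) in *.
      assert (Huv : d v u <= 2 * delta) by (pose proof (T v w u); lia).
      pose proof (T x a v). pose proof (T a u v). pose proof (T y b v). pose proof (T b u v).
      pose proof (T x a y). pose proof (T a b y).
      rewrite (Sy u v) in *. rewrite (Sy b u) in *. rewrite (Sy b y) in *.
      set (p' := Nat.max (L - 2*eps) (Nat.min p (n - (L - 2*eps)))).
      assert (Hp'n : p' <= n) by (unfold p'; lia).
      assert (Hlg : p' < length g) by (unfold n in *; destruct Hg as [[Hne _] _]; destruct g; [congruence|simpl in *; lia]).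
      pose proof (nth_error_nth' g a Hlg) as Hc.
      set (c := nth p' g a) in *.
      destruct (geod_pos Hg Hc) as [A' [B' _]].
      destruct Hg as [[_ Hgg] _].
      pose proof (Hgg _ _ _ _ Hp Hc) as Huc.
      pose proof (T v u c).
      exists p'. fold c. split; [exact Hlg|]. rewrite (Sy b c). fold n in B'.
      unfold absdiff in Huc. unfold p' in *. lia.
Qed.
Fixpoint words {A} (U : list A) (k : nat) : list (list A) :=
  match k with
  | 0 => [[]]
  | S k => flat_map (fun x => map (cons x) (words U k)) U
  end.

Lemma flat_map_len {A B} (f : A -> list B) c U :
  (forall x, length (f x) = c) -> length (flat_map f U) = length U * c.
Proof. intro H. induction U; simpl; [reflexivity|]. rewrite length_app, H, IHU. lia. Qed.

Lemma words_length {A} (U : list A) k : length (words U k) = length U ^ k.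
Proof.
  induction k; simpl; [reflexivity|].
  rewrite (flat_map_len _ (length (words U k))); [rewrite IHk; lia|].
  intro; apply length_map.
Qed.

Lemma words_in {A} (U : list A) k w :
  length w = k -> (forall x, In x w -> In x U) -> In w (words U k).
Proof.
  revert w; induction k; intros w Hl Hw; destruct w as [|x w]; simpl in *; try discriminate.
  - left; reflexivity.
  - apply in_flat_map. exists x. split; [apply Hw; auto|].
    apply in_map. apply IHk; auto.
Qed.

Lemma concat_len_bound {A} (F : nat -> list A) K ps :
  (forall p, In p ps -> length (F p) <= K) -> length (concat (map F ps)) <= length ps * K.
Proof.
  induction ps; intro H; simpl; [lia|]. rewrite length_app.
  pose proof (H a (or_introl eq_refl)). pose proof (IHps (fun p Hp => H p (or_intror Hp))). lia.
Qed.

Definition Veq_dec (V : Type) : forall x y : V, {x = y} + {x <> y} :=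
  fun x y => excluded_middle_informative (x = y).

Theorem lemma1p8
  (V : Type) (adj : V -> V -> Prop) (d : V -> V -> nat)
  (tight : list V -> Prop) (delta eps k1 K1 : nat)
  (Hd : is_path_metric adj d)
  (Hhyp : hyperbolic d delta)
  (Htight : tight_basic d tight)
  (Heps_pos : 0 < eps)
  (Heps : qg_stability d (1000 * delta) eps)
  (Hbow : bowditch_property d tight eps k1 K1) :
  forall L : nat, k1 + 4 * eps <= L ->
  exists kappa : nat, forall a b : V, d a b <= 3 * L ->
    forall cs : list (list V), NoDup cs ->
      (forall g1, In g1 cs -> channel d tight eps L a b g1) ->
      length cs <= kappa.
Proof.
  intros L HL. exists (((3 * L + 1) * K1) ^ (S L)).
  intros a b Hab cs Hnd Hch.
  destruct Htight as [Htg [Hex [_ _]]].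
  destruct (Hex a b) as [g [Htgg Hg]].
  set (U := nodup (Veq_dec V) (concat cs)).
  assert (HUv : forall v, In v U -> exists x y g2,
     tight_from_to d tight g2 x y /\ length g2 = S (3 * L) /\
     d x a <= 2 * eps /\ d y b <= 2 * eps /\ In v g2 /\ L <= d x v /\ L <= d y v).
  { intros v Hv. apply nodup_In in Hv. apply in_concat in Hv. destruct Hv as [g1 [Hg1 Hv]].
    destruct (Hch g1 Hg1) as [_ [_ [g2 [x [y [Ht [Hl [Hxa [Hyb [Hinc [[Hx _] [Hy _]]]]]]]]]]]].
    exists x, y, g2. split; [exact Ht|]. split; [exact Hl|]. split; [exact Hxa|]. split; [exact Hyb|].
    split; [apply Hinc; exact Hv|]. split; [apply Hx|apply Hy]; exact Hv. }
  assert (Hlg : length g <= 3 * L + 1).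
  { pose proof Hg as G'. destruct G' as [[Hne _] [Hs _]].
    apply (proj1 (starts_nth _ _)) in Hs.
    destruct (geod_pos Hg Hs) as [_ [_ [E _]]]. lia. }
  set (Sp := fun p => filter (fun v => (2*eps+k1 <=? d a (nth p g a)) &&
      (2*eps+k1 <=? d b (nth p g a)) && (d v (nth p g a) <=? 2*eps)) U).
  assert (HU : length U <= (3 * L + 1) * K1).
  { assert (Hinc : incl U (concat (map Sp (seq 0 (length g))))).
    { intros v Hv. destruct (HUv v Hv) as [x [y [g2 [[_ Hg2] [Hl2 [Hxa [Hyb [Hv2 [Hxv Hyv]]]]]]]]].
      assert (Hsm : 2 * delta <= eps).
      { apply (delta_small Hd delta eps Heps g2); [apply Hg2|]. lia. }
      destruct (geom Hd tight delta eps k1 L Hhyp Hex Hsm Heps_pos HL a b x y g2 g v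
                  Hg2 Hl2 Hxa Hyb Hv2 Hxv Hyv Hg) as [p [Hp [H1 [H2 H3]]]].
      apply in_concat. exists (Sp p). split.
      - apply in_map. apply in_seq. lia.
      - unfold Sp. apply filter_In. split; [exact Hv|].
        apply andb_true_intro; split; [apply andb_true_intro; split|]; apply Nat.leb_le; auto. }
    apply NoDup_incl_length in Hinc; [|apply NoDup_nodup].
    eapply Nat.le_trans; [exact Hinc|].
    eapply Nat.le_trans; [apply concat_len_bound with (K := K1)|].
    - intros p Hp. apply in_seq in Hp.
      set (c := nth p g a).
      destruct (Nat.leb_spec (2*eps+k1) (d a c)) as [Ca|Ca];
      [destruct (Nat.leb_spec (2*eps+k1) (d b c)) as [Cb|Cb]|].
      + apply (Hbow a b c (2 * eps)).
        * exists g. split; [split; auto|]. apply nth_In. lia.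
        * exact Ca.
        * exact Cb.
        * apply NoDup_filter, NoDup_nodup.
        * intros v Hv. unfold Sp in Hv. apply filter_In in Hv. destruct Hv as [Hv Hc].
          apply andb_prop in Hc. destruct Hc as [_ Hc]. apply Nat.leb_le in Hc.
          split; [exact Hc|].
          destruct (HUv v Hv) as [x [y [g2 [Ht [Hl2 [Hxa [Hyb [Hv2 _]]]]]]]].
          exists x, y, g2. rewrite (d_sym Hd a x), (d_sym Hd b y). split; [exact Hxa|]. split; [exact Hyb|]. split; [exact Ht|exact Hv2].
      + enough (Sp p = []) as -> by (simpl; lia).
        unfold Sp. destruct (filter _ U) as [|z r] eqn:E; [reflexivity|exfalso].
        assert (Hz : In z (z :: r)) by (left; reflexivity). rewrite <- E in Hz.
        apply filter_In in Hz. destruct Hz as [_ Hz].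
        apply andb_prop in Hz. destruct Hz as [Hz _]. apply andb_prop in Hz.
        destruct Hz as [_ Hz]. apply Nat.leb_le in Hz. fold c in Hz. lia.
      + enough (Sp p = []) as -> by (simpl; lia).
        unfold Sp. destruct (filter _ U) as [|z r] eqn:E; [reflexivity|exfalso].
        assert (Hz : In z (z :: r)) by (left; reflexivity). rewrite <- E in Hz.
        apply filter_In in Hz. destruct Hz as [_ Hz].
        apply andb_prop in Hz. destruct Hz as [Hz _]. apply andb_prop in Hz.
        destruct Hz as [Hz _]. apply Nat.leb_le in Hz. fold c in Hz. lia.
    - rewrite length_seq. apply Nat.mul_le_mono_r. exact Hlg. }
  assert (Hw : incl cs (words U (S L))).
  { intros g1 Hg1. destruct (Hch g1 Hg1) as [_ [Hl1 _]].
    apply words_in; [exact Hl1|]. intros v Hv. unfold U. apply nodup_In.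
    apply in_concat. exists g1. auto. }
  apply NoDup_incl_length in Hw; [|exact Hnd].
  rewrite words_length in Hw. eapply Nat.le_trans; [exact Hw|].
  apply Nat.pow_le_mono_l. exact HU.
Qed.
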